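(* Let $U,V\subset\mathcal{A}_0$ be compact sets such that $U^T$ and $V^T$ are complete. Then the following are equivalent: (a) $U^{**}=V^{**}$; (b) $U^T=V^T$; (c) $U^*=V^*$.
   Context: $D=\{z:|z|<1\}$, $\overline D$ its closure. $\mathcal{A}$ is the space of functions $f(z)=\sum_{k\ge0}a_k(f)z^k$ analytic in $D$, with the topology of locally uniform convergence; $\mathcal{A}_0=\{f\in\mathcal{A}: a_0(f)=1\}$. $\mathcal{A}(\overline D)$ is the set of functions analytic in some disk $\{|z|<R\}$ with $R>1$, and $\mathcal{A}_0(\overline D)=\{g\in\mathcal{A}(\overline D):a_0(g)=1\}$. The Hadamard product is $(f*g)(z)=\sum_{k\ge0}a_k(f)a_k(g)z^k$. For $V\subset\mathcal{A}_0$, $V^*=\{g\in\mathcal{A}_0:(f*g)(z)\ne0 \ \forall z\in D,\ \forall f\in V\}$, $V^{**}=(V^* )^*$, and $V^T=\{g\in\mathcal{A}_0(\overline D): (f*g)(1)\ne0 \ \forall f\in V\}$. For $x\in\overline D$, $(P_xf)(z)=f(xz)$; a set $W$ is complete if $P_xf\in W$ for all $f\in W$, $x\in\overline D$. *)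

(* Defs.v *)
From Stdlib Require Import Reals.
From Coquelicot Require Import Coquelicot.
Open Scope R_scope.

(* A power series f(z) = sum_k a_k z^k is represented by its coefficient
   sequence a : nat -> C.  Subsets of A are predicates on coefficient
   sequences. *)
Definition coeffs := nat -> C.

Fixpoint cpow (z : C) (n : nat) : C :=
  match n with O => RtoC 1 | S m => Cmult z (cpow z m) end.

Definition term (a : coeffs) (z : C) : nat -> C := fun k => Cmult (a k) (cpow z k).

(* f is analytic in D = {|z|<1}: its Taylor series converges on D *)
Definition in_A (a : coeffs) : Prop :=
  forall z : C, Cmod z < 1 -> ex_series (term a z).

Definition in_A0 (a : coeffs) : Prop := in_A a /\ a O = RtoC 1.

Definition in_AbarD (a : coeffs) : Prop :=
  exists R : R, 1 < R /\ forall z : C, Cmod z < R -> ex_series (term a z).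

Definition in_AbarD0 (a : coeffs) : Prop := in_AbarD a /\ a O = RtoC 1.

Definition hadamard (a b : coeffs) : coeffs := fun k => Cmult (a k) (b k).

Definition nonzero_at (a : coeffs) (z : C) : Prop :=
  forall l : C, is_series (term a z) l -> l <> RtoC 0.

Definition dual (V : coeffs -> Prop) : coeffs -> Prop :=
  fun g => in_A0 g /\
    forall f, V f -> forall z : C, Cmod z < 1 -> nonzero_at (hadamard f g) z.

Definition dualT (V : coeffs -> Prop) : coeffs -> Prop :=
  fun g => in_AbarD0 g /\ forall f, V f -> nonzero_at (hadamard f g) (RtoC 1).

(* (P_x f)(z) = f(xz) : coefficients a_k x^k *)
Definition Px (x : C) (a : coeffs) : coeffs := fun k => Cmult (a k) (cpow x k).

Definition complete (W : coeffs -> Prop) : Prop :=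
  forall f, W f -> forall x : C, Cmod x <= 1 -> W (Px x f).

Definition loc_unif_cvg (fs : nat -> coeffs) (f : coeffs) : Prop :=
  forall r : R, 0 < r < 1 -> forall eps : R, 0 < eps ->
  exists N : nat, forall n : nat, (N <= n)%nat ->
  forall z : C, Cmod z <= r ->
  forall l1 l2 : C, is_series (term (fs n) z) l1 -> is_series (term f z) l2 ->
  Cmod (Cminus l1 l2) < eps.

(* compactness in A (topology of locally uniform convergence; A is
   metrizable, so compactness = sequential compactness) *)
Definition compact_A (U : coeffs -> Prop) : Prop :=
  forall fs : nat -> coeffs, (forall n, U (fs n)) ->
  exists (phi : nat -> nat) (f : coeffs),
    (forall n, (phi n < phi (S n))%nat) /\ U f /\
    loc_unif_cvg (fun n => fs (phi n)) f.

Definition set_eq (U V : coeffs -> Prop) : Prop := forall f, U f <-> V f.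

(* Main.v *)
Require Import Defs.
From Stdlib Require Import Reals Lra Lia Psatz ClassicalEpsilon Classical.
From Coquelicot Require Import Coquelicot.
Open Scope R_scope.


Lemma cpow_mult (x y : C) n : cpow (x * y)%C n = (cpow x n * cpow y n)%C.
Proof. induction n; simpl. ring. rewrite IHn. ring. Qed.

Lemma cpow_add (x : C) m n : cpow x (m + n) = (cpow x m * cpow x n)%C.
Proof. induction m; simpl. ring. rewrite IHm. ring. Qed.

Lemma cpow_pow (x : C) m n : cpow (cpow x m) n = cpow x (m * n).
Proof. induction n; simpl. rewrite Nat.mul_0_r. reflexivity.
  rewrite IHn. replace (m * S n)%nat with (m + m * n)%nat by lia. now rewrite cpow_add. Qed.

Lemma cpow_1 n : cpow (RtoC 1) n = RtoC 1.
Proof. induction n; simpl. reflexivity. rewrite IHn. ring. Qed.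

Lemma Cmod_cpow (x : C) n : Cmod (cpow x n) = Cmod x ^ n.
Proof. induction n; simpl. apply Cmod_1. rewrite Cmod_mult, IHn. reflexivity. Qed.

Lemma Cmod_RtoC (x : R) : 0 <= x -> Cmod (RtoC x) = x.
Proof. intros. rewrite Cmod_R. now apply Rabs_pos_eq. Qed.

Lemma Cmod_INR n : Cmod (RtoC (INR n)) = INR n.
Proof. apply Cmod_RtoC, pos_INR. Qed.

Fixpoint csum (f : nat -> C) (n : nat) : C :=
  match n with O => RtoC 0 | S m => (csum f m + f m)%C end.

Lemma sum_n_csum (a : nat -> C) n : sum_n a n = csum a (S n).
Proof. induction n. simpl. rewrite sum_O. change (a 0%nat = (0 + a 0%nat)%C). ring.
  rewrite sum_Sn, IHn. reflexivity. Qed.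

Lemma csum_ext f g n : (forall k, (k < n)%nat -> f k = g k) -> csum f n = csum g n.
Proof. induction n; intros H; simpl. reflexivity. rewrite IHn, H; auto. Qed.

Lemma csum_plus f g n : csum (fun k => f k + g k)%C n = (csum f n + csum g n)%C.
Proof. induction n; simpl. ring. rewrite IHn. ring. Qed.

Lemma csum_scal c f n : csum (fun k => c * f k)%C n = (c * csum f n)%C.
Proof. induction n; simpl. ring. rewrite IHn. ring. Qed.

Lemma csum_norm f n M : (forall k, (k < n)%nat -> Cmod (f k) <= M) -> Cmod (csum f n) <= INR n * M.
Proof. induction n; intros H. simpl. rewrite Cmod_0. lra.
  change (csum f (S n)) with (csum f n + f n)%C. eapply Rle_trans. apply Cmod_triangle. rewrite S_INR.
  assert (Cmod (csum f n) <= INR n * M) by (apply IHn; auto). assert (Cmod (f n) <= M) by auto. lra. Qed.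

Lemma csum_single f n k : (k < n)%nat -> (forall m, (m < n)%nat -> m <> k -> f m = RtoC 0) -> csum f n = f k.
Proof. induction n; intros Hk H. lia. simpl.
  destruct (Nat.eq_dec k n). subst. rewrite (csum_ext f (fun _ => RtoC 0)).
  assert (forall p, csum (fun _ => RtoC 0) p = RtoC 0) as Z.
  { clear. induction p; simpl. reflexivity. rewrite IHp. ring. }
  rewrite Z. ring. intros; apply H; lia.
  rewrite IHn, (H n); try lia. ring. intros; apply H; lia. Qed.

Definition cvgC (s : nat -> C) (l : C) :=
  forall eps, 0 < eps -> exists N, forall n, (N <= n)%nat -> Cmod (s n - l) < eps.

Lemma Cmod_re_im (z : C) : Cmod z <= Rabs (Re z) + Rabs (Im z).
Proof. destruct z as [x y]. unfold Cmod; simpl.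
  rewrite <- (sqrt_pow2 (Rabs x + Rabs y)) by (generalize (Rabs_pos x) (Rabs_pos y); lra).
  apply sqrt_le_1_alt.
  assert (Rabs x * Rabs x = x*x) by (rewrite <- Rabs_mult; apply Rabs_pos_eq; nra).
  assert (Rabs y * Rabs y = y*y) by (rewrite <- Rabs_mult; apply Rabs_pos_eq; nra).
  generalize (Rabs_pos x) (Rabs_pos y). nra. Qed.

Lemma is_series_cvgC a l : is_series a l <-> cvgC (csum a) l.
Proof. split.
- intros H eps Heps. unfold is_series in H.
  pose proof (proj1 (filterlim_locally (sum_n a) l) H (mkposreal (eps/2) ltac:(lra))) as H'.
  destruct H' as [N HN]. exists (S N). intros n Hn. destruct n. lia.
  specialize (HN n ltac:(lia)). rewrite sum_n_csum in HN. remember (csum a (S n)) as s eqn:Es. clear Es.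
  destruct HN as [H1 H2].
  eapply Rle_lt_trans. apply Cmod_re_im.
  destruct s as [x y], l as [x0 y0]. simpl in *.
  change (Rabs (x - x0) < eps/2) in H1. change (Rabs (y - y0) < eps/2) in H2.
  unfold Rminus in *. lra.
- intros H. unfold is_series. apply (proj2 (filterlim_locally _ _)). intros eps.
  destruct (H eps (cond_pos eps)) as [N HN]. exists N. intros n Hn.
  apply C_NormedModule_mixin_compat1. rewrite sum_n_csum.
  unfold minus, plus, opp; simpl.
  replace (Cmod _) with (Cmod (csum a (S n) - l)). apply HN. lia.
  reflexivity. Qed.

Lemma Cmod_sub_sym (x y : C) : Cmod (x - y) = Cmod (y - x).
Proof. rewrite <- Cmod_opp. f_equal. ring. Qed.

Lemma Cmod_tri3 (x y z : C) : Cmod (x - z) <= Cmod (x - y) + Cmod (y - z).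
Proof. replace (x - z)%C with ((x - y) + (y - z))%C by ring. apply Cmod_triangle. Qed.

Lemma is_series_unique_C (a : nat -> C) (l1 l2 : C) : is_series a l1 -> is_series a l2 -> l1 = l2.
Proof. rewrite !is_series_cvgC. intros H1 H2.
  destruct (Req_dec (Cmod (l1 - l2)) 0) as [E|E].
  - apply Cmod_eq_0 in E. replace l1 with ((l1 - l2) + l2)%C by ring. rewrite E. ring.
  - exfalso. assert (P : 0 < Cmod (l1 - l2)) by (generalize (Cmod_ge_0 (l1 - l2)); lra).
    destruct (H1 _ (ltac:(lra) : 0 < Cmod (l1-l2)/2)) as [N1 HN1].
    destruct (H2 _ (ltac:(lra) : 0 < Cmod (l1-l2)/2)) as [N2 HN2].
    specialize (HN1 (max N1 N2) ltac:(lia)). specialize (HN2 (max N1 N2) ltac:(lia)).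
    generalize (Cmod_tri3 l1 (csum a (max N1 N2)) l2). rewrite (Cmod_sub_sym l1 (csum a _)). lra. Qed.

Lemma cvgC_bound (s : nat -> C) (l x : C) M N0 : cvgC s l -> (forall n, (N0 <= n)%nat -> Cmod (s n - x) <= M) ->
  Cmod (l - x) <= M.
Proof. intros H HM. apply Rnot_lt_le. intros C.
  destruct (H (Cmod (l - x) - M) ltac:(lra)) as [N HN].
  specialize (HN (max N N0) ltac:(lia)). specialize (HM (max N N0) ltac:(lia)).
  generalize (Cmod_tri3 l (s (max N N0)) x). rewrite (Cmod_sub_sym l (s _)). lra. Qed.

Lemma is_series_plusC (a b : nat -> C) (la lb : C) : is_series a la -> is_series b lb ->
  is_series (fun n => a n + b n)%C (la + lb)%C.
Proof. intros. exact (is_series_plus a b la lb H H0). Qed.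

Lemma is_series_minusC (a b : nat -> C) (la lb : C) : is_series a la -> is_series b lb ->
  is_series (fun n => a n - b n)%C (la - lb)%C.
Proof. intros. exact (is_series_minus a b la lb H H0). Qed.

Lemma is_series_scalC (c : C) (a : nat -> C) (la : C) : is_series a la ->
  is_series (fun n => c * a n)%C (c * la)%C.
Proof. intros. exact (is_series_scal c a la H). Qed.

Lemma is_series_zeroC : is_series (fun _ => RtoC 0) (RtoC 0).
Proof. apply is_series_cvgC. intros eps He. exists O. intros n _.
  assert (csum (fun _ => RtoC 0) n = RtoC 0). { induction n; simpl. reflexivity. rewrite IHn. ring. }
  rewrite H. replace (RtoC 0 - RtoC 0)%C with (RtoC 0) by ring. rewrite Cmod_0. lra. Qed.

Lemma is_series_ext_C (a b : nat -> C) (l : C) : (forall n, a n = b n) -> is_series a l -> is_series b l.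
Proof. apply is_series_ext. Qed.

Lemma is_series_csum (f : nat -> nat -> C) (L : nat -> C) N :
  (forall j, (j < N)%nat -> is_series (f j) (L j)) ->
  is_series (fun m => csum (fun j => f j m) N) (csum L N).
Proof. induction N; intros H; simpl. apply is_series_zeroC.
  apply is_series_plusC. apply IHN; auto. apply H; lia. Qed.

Lemma csum_geom_bound (a : nat -> C) M q n m : 0 <= q < 1 -> (forall k, Cmod (a k) <= M * q ^ k) ->
  (n <= m)%nat -> Cmod (csum a m - csum a n) <= M * (q ^ n - q ^ m) / (1 - q).
Proof. intros Hq H Hnm. induction Hnm.
  - replace (csum a n - csum a n)%C with (RtoC 0) by ring. rewrite Cmod_0.
    replace (M * (q^n - q^n) / (1-q)) with 0 by (field; lra). lra.
  - change (csum a (S m)) with (csum a m + a m)%C.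
    replace (csum a m + a m - csum a n)%C with ((csum a m - csum a n) + a m)%C by ring.
    eapply Rle_trans. apply Cmod_triangle. specialize (H m).
    replace (M * (q ^ n - q ^ S m) / (1 - q)) with (M * (q ^ n - q ^ m) / (1 - q) + M * q^m)
      by (simpl; field; lra). lra. Qed.

Lemma M_nonneg (a : nat -> C) M q : (forall k, Cmod (a k) <= M * q ^ k) -> 0 <= q -> 0 <= M.
Proof. intros H _. specialize (H O). simpl in H. generalize (Cmod_ge_0 (a O)). lra. Qed.

Lemma geom_ex (a : nat -> C) M q : 0 <= q < 1 -> (forall k, Cmod (a k) <= M * q ^ k) ->
  exists l : C, is_series a l.
Proof. intros Hq H.
  assert (E : ex_series a).
  { apply (ex_series_le (V := C_CompleteNormedModule) a (fun k => M * q ^ k)).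
    intros n. apply H. exists (M * / (1 - q)). apply (is_series_scal_l (V := R_NormedModule)).
    apply is_series_geom. rewrite Rabs_pos_eq; lra. }
  destruct E as [l Hl]. exists l. exact Hl. Qed.

Lemma geom_tail (a : nat -> C) M q (l : C) n : 0 <= q < 1 -> (forall k, Cmod (a k) <= M * q ^ k) ->
  is_series a l -> Cmod (l - csum a n) <= M * q ^ n / (1 - q).
Proof. intros Hq H Hl. apply is_series_cvgC in Hl. apply (cvgC_bound _ _ _ _ n Hl).
  intros m Hm. eapply Rle_trans. apply (csum_geom_bound a M q n m Hq H Hm).
  assert (0 <= M) by (eapply M_nonneg; eauto; lra).
  assert (0 <= q ^ m) by (apply pow_le; lra).
  apply Rmult_le_compat_r. apply Rlt_le, Rinv_0_lt_compat; lra. nra. Qed.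

Lemma geom_total (a : nat -> C) M q (l : C) : 0 <= q < 1 -> (forall k, Cmod (a k) <= M * q ^ k) ->
  is_series a l -> Cmod l <= M / (1 - q).
Proof. intros Hq H Hl. generalize (geom_tail a M q l O Hq H Hl). simpl.
  replace (l - RtoC 0)%C with l by ring. rewrite Rmult_1_r. auto. Qed.

Lemma series_terms_bounded (a : nat -> C) (l : C) : is_series a l -> exists M, forall k, Cmod (a k) <= M.
Proof. intros H. apply is_series_cvgC in H. destruct (H 1 Rlt_0_1) as [N HN].
  assert (forall P, exists M, forall k, (k < P)%nat -> Cmod (a k) <= M) as Fin.
  { induction P. exists 0. intros; lia. destruct IHP as [M HM]. exists (Rmax M (Cmod (a P))).
    intros k Hk. destruct (Nat.eq_dec k P). subst. apply Rmax_r.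
    eapply Rle_trans. apply HM. lia. apply Rmax_l. }
  destruct (Fin N) as [M HM]. exists (Rmax M 2). intros k.
  destruct (Compare_dec.lt_dec k N). eapply Rle_trans. apply HM; auto. apply Rmax_l.
  eapply Rle_trans; [|apply Rmax_r].
  replace (a k) with ((csum a (S k) - l) - (csum a k - l))%C by (change (csum a (S k)) with (csum a k + a k)%C; ring).
  unfold Cminus at 1. eapply Rle_trans. apply Cmod_triangle. rewrite Cmod_opp.
  generalize (HN (S k) ltac:(lia)) (HN k ltac:(lia)). lra. Qed.

Lemma demoivre t n : cpow (cos t, sin t) n = (cos (INR n * t), sin (INR n * t)).
Proof. induction n. simpl. rewrite Rmult_0_l, cos_0, sin_0. reflexivity.
  change (cpow (cos t, sin t) (S n)) with ((cos t, sin t) * cpow (cos t, sin t) n)%C.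
  rewrite IHn. rewrite S_INR. replace ((INR n + 1) * t) with (t + INR n * t) by ring.
  rewrite cos_plus, sin_plus. unfold Cmult; simpl. f_equal; ring. Qed.

Definition omega (N : nat) : C := (cos (2 * PI / INR N), sin (2 * PI / INR N)).

Lemma Cmod_cos_sin t : Cmod (cos t, sin t) = 1.
Proof. unfold Cmod; simpl. assert (H := sin2_cos2 t). unfold Rsqr in H.
  replace (cos t * (cos t * 1) + sin t * (sin t * 1)) with 1 by nra. apply sqrt_1. Qed.

Lemma Cmod_omega_pow N j : Cmod (cpow (omega N) j) = 1.
Proof. rewrite Cmod_cpow. unfold omega. rewrite Cmod_cos_sin. apply pow1. Qed.

Lemma omega_N N : (0 < N)%nat -> cpow (omega N) N = RtoC 1.
Proof. intros H. unfold omega. rewrite demoivre.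
  replace (INR N * (2 * PI / INR N)) with (2 * PI). rewrite cos_2PI, sin_2PI. reflexivity.
  field. apply not_0_INR. lia. Qed.

Lemma csum_geom (z : C) N : ((z - 1) * csum (cpow z) N = cpow z N - 1)%C.
Proof. induction N; simpl. ring. rewrite Cmult_plus_distr_l, IHN. ring. Qed.

Lemma csum_const1 N : csum (fun _ => RtoC 1) N = RtoC (INR N).
Proof. induction N. reflexivity. change (csum (fun _ => RtoC 1) (S N)) with (csum (fun _ => RtoC 1) N + 1)%C.
  rewrite IHN, S_INR, <- RtoC_plus. reflexivity. Qed.

Lemma omega_pow_ne1 N s : (0 < N)%nat -> (0 < s < 2 * N)%nat -> s <> N -> cpow (omega N) s <> RtoC 1.
Proof. intros HN Hs HsN E. unfold omega in E. rewrite demoivre in E. injection E. intros Hsin Hcos.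
  set (th := INR s * (2 * PI / INR N)) in *.
  assert (HN' : 0 < INR N) by (apply lt_0_INR; lia).
  assert (Hs1 : 0 < INR s) by (apply lt_0_INR; lia).
  assert (Hs2 : INR s < 2 * INR N) by (replace (2 * INR N) with (INR (2 * N)) by (rewrite mult_INR; simpl; ring); apply lt_INR; lia).
  assert (0 < th < 4 * PI).
  { unfold th. generalize PI_RGT_0. intros. split.
    apply Rmult_lt_0_compat; auto. apply Rdiv_lt_0_compat; lra.
    replace (INR s * (2 * PI / INR N)) with (2 * PI * (INR s / INR N)) by (field; lra).
    assert (INR s / INR N < 2). { apply Rmult_lt_reg_r with (INR N); auto. field_simplify; lra. }
    nra. }
  destruct (sin_eq_0_0 th Hsin) as [k Hk].
  generalize PI_RGT_0. intros HPI.
  assert (0 < IZR k < 4). { rewrite Hk in H. split; nra. }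
  destruct H0 as [H1 H2]. apply lt_IZR in H1. apply lt_IZR in H2.
  assert (k = 1 \/ k = 2 \/ k = 3)%Z as Hc by lia.
  destruct Hc as [ -> | [ -> | -> ] ].
  - rewrite Hk in Hcos. rewrite Rmult_1_l, cos_PI in Hcos. lra.
  - apply HsN. apply INR_eq. unfold th in Hk.
    apply Rmult_eq_reg_r with (2 * PI / INR N). rewrite Hk. field. lra.
    apply Rgt_not_eq. apply Rdiv_lt_0_compat; lra.
  - rewrite Hk in Hcos. replace (IZR 3 * PI) with (PI + 2 * INR 1 * PI) in Hcos by (simpl; ring).
    rewrite cos_period, cos_PI in Hcos. lra. Qed.

Lemma root_sum_zero N s : (0 < N)%nat -> (0 < s < 2 * N)%nat -> s <> N ->
  csum (fun j => cpow (omega N) (j * s)) N = RtoC 0.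
Proof. intros HN Hs HsN. set (z := cpow (omega N) s).
  rewrite (csum_ext _ (cpow z)). 2:{ intros. unfold z. rewrite cpow_pow. f_equal. lia. }
  assert (E : ((z - 1) * csum (cpow z) N = 0)%C).
  { rewrite csum_geom. unfold z. rewrite cpow_pow, Nat.mul_comm, <- cpow_pow, omega_N, cpow_1 by auto. ring. }
  assert (Z : (z - 1)%C <> RtoC 0).
  { intros Z. apply (omega_pow_ne1 N s HN Hs HsN). fold z. replace z with ((z - 1) + 1)%C by ring. rewrite Z. ring. }
  apply Cmod_eq_0. apply (f_equal Cmod) in E. rewrite Cmod_mult, Cmod_0 in E.
  apply Cmod_gt_0 in Z. apply Rmult_integral in E. destruct E; [lra|auto]. Qed.

Lemma choiceC (P : nat -> C -> Prop) : (forall j, exists l, P j l) -> exists L : nat -> C, forall j, P j (L j).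
Proof. intros H. exists (fun j => proj1_sig (constructive_indefinite_description _ (H j))).
  intros j. exact (proj2_sig (constructive_indefinite_description _ (H j))). Qed.

Lemma cauchy_est (d : nat -> C) r q D eps : 0 < r -> 0 <= q < 1 ->
  (forall k, Cmod (d k) * r ^ k <= D * q ^ k) ->
  (forall z, Cmod z = r -> forall l, is_series (term d z) l -> Cmod l <= eps) ->
  forall k, Cmod (d k) * r ^ k <= eps.
Proof. intros Hr Hq HD Heps k.
  assert (D0 : 0 <= D). { specialize (HD O). simpl in HD. generalize (Cmod_ge_0 (d O)). lra. }
  apply Rle_plus_epsilon. intros eta Heta.
  destruct (pow_lt_1_zero q ltac:(rewrite Rabs_pos_eq; lra) (eta * (1 - q) / (D + 1))) as [N0 HN0].
  { apply Rdiv_lt_0_compat; nra. }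
  set (N := max N0 (S k)).
  assert (HqN : D * q ^ N / (1 - q) < eta).
  { specialize (HN0 N ltac:(lia)). rewrite Rabs_pos_eq in HN0 by (apply pow_le; lra).
    assert (0 <= q ^ N) by (apply pow_le; lra).
    assert (q ^ N * (D + 1) < eta * (1 - q) / (D + 1) * (D + 1)) by (apply Rmult_lt_compat_r; lra).
    replace (eta * (1 - q) / (D + 1) * (D + 1)) with (eta * (1 - q)) in H0 by (field; lra).
    apply Rmult_lt_reg_r with (1 - q). lra.
    replace (D * q ^ N / (1 - q) * (1 - q)) with (D * q ^ N) by (field; lra). nra. }
  assert (HNpos : (0 < N)%nat) by lia.
  set (w := omega N).
  set (z := fun j => (RtoC r * cpow w j)%C).
  assert (Hz : forall j, Cmod (z j) = r).
  { intros j. unfold z. rewrite Cmod_mult, Cmod_RtoC by lra. unfold w. rewrite Cmod_omega_pow. ring. }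
  assert (Hterm : forall j m, Cmod (term d (z j) m) <= D * q ^ m).
  { intros j m. unfold term. rewrite Cmod_mult, Cmod_cpow, Hz. apply HD. }
  destruct (choiceC (fun j l => is_series (term d (z j)) l)) as [L HL].
  { intros j. apply (geom_ex _ D q Hq (Hterm j)). }
  set (e := (N - k)%nat).
  set (c := fun j => cpow w (j * e)).
  set (S := csum (fun j => c j * L j)%C N).
  set (t := fun m => csum (fun j => c j * term d (z j) m)%C N).
  assert (HS : is_series t S).
  { apply (is_series_csum (fun j m => c j * term d (z j) m)%C (fun j => c j * L j)%C).
    intros j _. apply is_series_scalC. apply HL. }
  set (E := fun m => csum (fun j => cpow w (j * (m + e))) N).
  assert (Ht : forall m, t m = (d m * cpow (RtoC r) m * E m)%C).
  { intros m. unfold t, E. rewrite <- csum_scal. apply csum_ext. intros j _.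
    unfold c, term, z. rewrite cpow_mult, cpow_pow.
    replace (j * (m + e))%nat with (j * e + j * m)%nat by ring. rewrite cpow_add.
    rewrite (Nat.mul_comm j m). ring. }
  assert (HE : forall m, Cmod (E m) <= INR N).
  { intros m. unfold E. rewrite <- (Rmult_1_r (INR N)). apply csum_norm. intros. unfold w. rewrite Cmod_omega_pow. lra. }
  assert (Htb : forall m, Cmod (t m) <= (INR N * D) * q ^ m).
  { intros m. rewrite Ht, !Cmod_mult, Cmod_cpow, Cmod_RtoC by lra.
    specialize (HD m). specialize (HE m). generalize (Cmod_ge_0 (E m)) (Cmod_ge_0 (d m)).
    assert (0 <= r ^ m) by (apply pow_le; lra). intros. 
    assert (Cmod (d m) * r ^ m * Cmod (E m) <= D * q ^ m * INR N).
    { apply Rmult_le_compat; try nra. }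
    lra. }
  assert (Hsum : csum t N = (d k * cpow (RtoC r) k * RtoC (INR N))%C).
  { rewrite (csum_single t N k); [ | lia | intros m Hm Hmk; rewrite Ht; unfold E;
      unfold w; rewrite root_sum_zero; [ring|lia|lia|lia]].
    rewrite Ht. f_equal. unfold E. rewrite <- csum_const1. apply csum_ext. intros j _.
    replace (k + e)%nat with N by lia. unfold w. rewrite Nat.mul_comm, <- cpow_pow, omega_N by auto.
    apply cpow_1. }
  assert (Htail := geom_tail t (INR N * D) q S N Hq Htb HS).
  assert (HSb : Cmod S <= INR N * eps).
  { unfold S. apply csum_norm. intros j _. unfold c, w. rewrite Cmod_mult, Cmod_omega_pow.
    rewrite Rmult_1_l. apply (Heps (z j) (Hz j) (L j) (HL j)). }
  rewrite Hsum in Htail.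
  assert (Cmod (d k * cpow (RtoC r) k * RtoC (INR N)) <= INR N * eps + INR N * D * q ^ N / (1 - q)).
  { generalize (Cmod_tri3 (d k * cpow (RtoC r) k * RtoC (INR N))%C S 0).
    replace (d k * cpow (RtoC r) k * RtoC (INR N) - 0)%C with (d k * cpow (RtoC r) k * RtoC (INR N))%C by ring.
    replace (S - 0)%C with S by ring. rewrite Cmod_sub_sym. lra. }
  rewrite !Cmod_mult, Cmod_cpow, Cmod_RtoC, Cmod_INR in H by lra.
  assert (HNr : 0 < INR N) by (apply lt_0_INR; lia).
  assert (Cmod (d k) * r ^ k <= eps + D * q ^ N / (1 - q)).
  { apply Rmult_le_reg_r with (INR N). auto. 
    replace ((eps + D * q ^ N / (1 - q)) * INR N) with (INR N * eps + INR N * D * q ^ N / (1 - q)) by (field; lra).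
    lra. }
  lra. Qed.

Lemma abs_between x M : Rabs x <= M -> -M <= x <= M.
Proof. intros H. generalize (Rle_abs x) (Rle_abs (-x)). rewrite Rabs_Ropp. lra. Qed.

Lemma choice_nat2 (P : nat -> nat -> nat -> Prop) : (forall k N, exists p, P k N p) ->
  exists f : nat -> nat -> nat, forall k N, P k N (f k N).
Proof. intros H. exists (fun k N => proj1_sig (constructive_indefinite_description _ (H k N))).
  intros k N. exact (proj2_sig (constructive_indefinite_description _ (H k N))). Qed.

Lemma valadh_use (un : nat -> R) x : ValAdh un x -> forall d, 0 < d -> forall N, exists p, (N <= p)%nat /\ Rabs (un p - x) < d.
Proof. intros H d Hd N. destruct (H (disc x (mkposreal d Hd)) N) as [p [Hp Hv]].
  exists (mkposreal d Hd). intros y Hy. exact Hy. exists p. split; auto. Qed.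

Lemma cluster2D (w : nat -> C) M : (forall n, Cmod (w n) <= M) ->
  exists w0 : C, forall d, 0 < d -> forall N, exists n, (N <= n)%nat /\ Cmod (w n - w0) < d.
Proof. intros HM.
  assert (Hre : forall n, Rabs (fst (w n)) <= M).
  { intros n. eapply Rle_trans; [|apply HM]. eapply Rle_trans; [|apply Rmax_Cmod]. apply Rmax_l. }
  assert (Him : forall n, Rabs (snd (w n)) <= M).
  { intros n. eapply Rle_trans; [|apply HM]. eapply Rle_trans; [|apply Rmax_Cmod]. apply Rmax_r. }
  destruct (Bolzano_Weierstrass (fun n => fst (w n)) (fun c => -M <= c <= M) (compact_P3 _ _)
    (fun n => abs_between _ _ (Hre n))) as [x Hx].
  assert (Hx' := valadh_use _ _ Hx).
  destruct (choice_nat2 (fun k N p => (N <= p)%nat /\ Rabs (fst (w p) - x) < / (INR k + 1))) as [f Hf].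
  { intros k N. apply Hx'. apply Rinv_0_lt_compat. generalize (pos_INR k). lra. }
  set (psi := fix psi k := match k with O => f O O | S k' => f k (S (psi k')) end).
  assert (Hpsi1 : forall k, (k <= psi k)%nat).
  { induction k. lia. simpl. destruct (Hf (S k) (S (psi k))) as [H1 _]. fold psi. lia. }
  assert (Hpsi2 : forall k, Rabs (fst (w (psi k)) - x) < / (INR k + 1)).
  { destruct k; simpl. apply Hf. apply Hf. }
  destruct (Bolzano_Weierstrass (fun k => snd (w (psi k))) (fun c => -M <= c <= M) (compact_P3 _ _)
    (fun n => abs_between _ _ (Him (psi n)))) as [y Hy].
  assert (Hy' := valadh_use _ _ Hy).
  exists (x, y). intros d Hd N.
  destruct (archimed_cor1 (d/2) ltac:(lra)) as [k1 [Hk1 Hk1']].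
  destruct (Hy' (d/2) ltac:(lra) (max N k1)) as [p [Hp Hp']].
  exists (psi p). split. specialize (Hpsi1 p). lia.
  eapply Rle_lt_trans. apply Cmod_re_im. simpl.
  specialize (Hpsi2 p). 
  assert (/ (INR p + 1) < d / 2).
  { eapply Rle_lt_trans; [|apply Hk1]. apply Rinv_le_contravar. apply lt_0_INR; lia.
    assert (INR k1 <= INR p) by (apply le_INR; lia). lra. }
  unfold Rminus in *. lra. Qed.

Lemma cpow_diff (w v : C) rho k : Cmod w <= rho -> Cmod v <= rho -> 1 <= rho ->
  Cmod (cpow w k - cpow v k) <= INR k * rho ^ k * Cmod (w - v).
Proof. intros Hw Hv Hr. induction k.
  - simpl. replace (RtoC 1 - RtoC 1)%C with (RtoC 0) by ring. rewrite Cmod_0. lra.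
  - simpl cpow. replace (w * cpow w k - v * cpow v k)%C with (w * (cpow w k - cpow v k) + (w - v) * cpow v k)%C by ring.
    eapply Rle_trans. apply Cmod_triangle. rewrite !Cmod_mult, Cmod_cpow.
    assert (0 <= Cmod v ^ k <= rho ^ k). { split. apply pow_le, Cmod_ge_0. apply pow_incr. split; auto. apply Cmod_ge_0. }
    assert (rho ^ k <= rho ^ S k). { simpl. assert (0 <= rho ^ k) by (apply pow_le; lra). nra. }
    generalize (Cmod_ge_0 w) (Cmod_ge_0 (w - v)) (Cmod_ge_0 (cpow w k - cpow v k)) (pos_INR k). intros.
    rewrite S_INR. simpl pow.
    assert (Cmod w * Cmod (cpow w k - cpow v k) <= rho * (INR k * rho ^ k * Cmod (w - v))).
    { apply Rmult_le_compat; auto. }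
    assert (Cmod (w - v) * Cmod v ^ k <= Cmod (w - v) * (rho * rho ^ k)) by (apply Rmult_le_compat_l; simpl in H0; lra).
    nra. Qed.

Lemma gbound_of_ex (a : nat -> C) R s : (forall z, Cmod z < R -> ex_series (term a z)) -> 0 <= s < R ->
  exists M, forall k, Cmod (a k) * s ^ k <= M.
Proof. intros H Hs. destruct (H (RtoC s)) as [l Hl]. rewrite Cmod_RtoC; lra.
  destruct (series_terms_bounded _ l Hl) as [M HM]. exists M. intros k.
  specialize (HM k). unfold term in HM. rewrite Cmod_mult, Cmod_cpow, Cmod_RtoC in HM by lra. exact HM. Qed.

Lemma prod_bound a b r R1 th X Y k : 0 <= a -> 0 <= b -> 0 < r -> 0 < R1 -> 0 <= th ->
  a * r ^ k <= X -> b * R1 ^ k <= Y -> a * b * (th * (r * R1)) ^ k <= X * Y * th ^ k.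
Proof. intros. rewrite !Rpow_mult_distr.
  assert (0 <= r ^ k) by (apply pow_le; lra). assert (0 <= R1 ^ k) by (apply pow_le; lra).
  assert (0 <= th ^ k) by (apply pow_le; lra).
  replace (a * b * (th ^ k * (r ^ k * R1 ^ k))) with ((a * r ^ k) * (b * R1 ^ k) * th ^ k) by ring.
  apply Rmult_le_compat_r; auto. apply Rmult_le_compat; auto; apply Rmult_le_pos; auto. Qed.

Lemma Cmod_term_le (c : coeffs) w rho k : Cmod w <= rho -> Cmod (term c w k) <= Cmod (c k) * rho ^ k.
Proof. intros H. unfold term. rewrite Cmod_mult, Cmod_cpow. apply Rmult_le_compat_l. apply Cmod_ge_0.
  apply pow_incr. split; auto. apply Cmod_ge_0. Qed.

Lemma stepB (u v : coeffs) r eps : in_A u -> in_A v -> 0 < r < 1 ->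
  (forall z, Cmod z <= r -> forall l1 l2 : C, is_series (term v z) l1 -> is_series (term u z) l2 -> Cmod (l1 - l2) < eps) ->
  forall k, Cmod (v k - u k) * r ^ k <= eps.
Proof. intros Hu Hv Hr H.
  set (s := (1 + r) / 2).
  destruct (gbound_of_ex u 1 s Hu ltac:(unfold s; lra)) as [Au HAu].
  destruct (gbound_of_ex v 1 s Hv ltac:(unfold s; lra)) as [Av HAv].
  apply (cauchy_est _ r (r / s) (Av + Au)); try lra.
  - split. apply Rlt_le, Rdiv_lt_0_compat; unfold s; lra. apply Rmult_lt_reg_r with s. unfold s; lra.
    field_simplify; unfold s; lra.
  - intros k. replace (r ^ k) with (s ^ k * (r / s) ^ k) by (rewrite <- Rpow_mult_distr; f_equal; field; unfold s; lra).
    assert (0 <= (r / s) ^ k) by (apply pow_le; apply Rlt_le, Rdiv_lt_0_compat; unfold s; lra).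
    assert (Cmod (v k - u k) <= Cmod (v k) + Cmod (u k)).
    { unfold Cminus. eapply Rle_trans. apply Cmod_triangle. rewrite Cmod_opp. lra. }
    assert (0 <= s ^ k) by (apply pow_le; unfold s; lra).
    specialize (HAu k). specialize (HAv k).
    assert (Cmod (v k - u k) * s ^ k <= Av + Au) by nra.
    nra.
  - intros z Hz l Hl. destruct (Hv z ltac:(lra)) as [l1 H1]. destruct (Hu z ltac:(lra)) as [l2 H2].
    assert (Hd := is_series_minusC _ _ _ _ H1 H2).
    assert (l = (l1 - l2)%C).
    { apply (is_series_unique_C (term (fun k => v k - u k)%C z)); auto.
      eapply is_series_ext_C; [|exact Hd]. intros n. unfold term. ring. }
    subst l. apply Rlt_le. apply (H z); auto. lra. Qed.

Lemma stepC (v u b : coeffs) r R1 rho0 th eps B w (l1 l2 : C) : 0 < r -> 0 < R1 -> 0 <= th < 1 ->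
  rho0 = th * (r * R1) -> (forall k, Cmod (v k - u k) * r ^ k <= eps) -> (forall k, Cmod (b k) * R1 ^ k <= B) ->
  Cmod w <= rho0 -> is_series (term (hadamard v b) w) l1 -> is_series (term (hadamard u b) w) l2 ->
  Cmod (l1 - l2) <= eps * B / (1 - th).
Proof. intros Hr HR1 Hth Hrho Heps HB Hw H1 H2.
  apply (geom_total (fun k => term (hadamard v b) w k - term (hadamard u b) w k)%C (eps * B) th); auto.
  2: apply is_series_minusC; auto.
  intros k. replace (term (hadamard v b) w k - term (hadamard u b) w k)%C with (term (hadamard (fun k => v k - u k)%C b) w k)
    by (unfold term, hadamard; ring).
  eapply Rle_trans. apply Cmod_term_le. exact Hw. unfold hadamard. rewrite Cmod_mult, Hrho.
  apply prod_bound; auto; try apply Cmod_ge_0; lra. Qed.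

Lemma contin (c : coeffs) Cc th rho0 K w0 w (l0 lw : C) : 0 <= th < 1 -> 1 <= rho0 ->
  (forall k, Cmod (c k) * rho0 ^ k <= Cc * th ^ k) -> Cmod w0 <= rho0 -> Cmod w <= rho0 ->
  is_series (term c w0) l0 -> is_series (term c w) lw ->
  Cmod (l0 - lw) <= 2 * (Cc * th ^ K / (1 - th)) + INR K * (Cc * INR K * Cmod (w0 - w)).
Proof. intros Hth Hr Hc Hw0 Hw H0 Hlw.
  assert (Hb : forall z, Cmod z <= rho0 -> forall k, Cmod (term c z k) <= Cc * th ^ k).
  { intros z Hz k. eapply Rle_trans. apply Cmod_term_le; eauto. apply Hc. }
  assert (T0 := geom_tail _ Cc th l0 K Hth (Hb w0 Hw0) H0).
  assert (Tw := geom_tail _ Cc th lw K Hth (Hb w Hw) Hlw).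
  assert (C0 : 0 <= Cc). { specialize (Hc O). simpl in Hc. generalize (Cmod_ge_0 (c O)). lra. }
  assert (Mid : Cmod (csum (term c w0) K - csum (term c w) K) <= INR K * (Cc * INR K * Cmod (w0 - w))).
  { replace (csum (term c w0) K - csum (term c w) K)%C with (csum (fun k => c k * (cpow w0 k - cpow w k))%C K).
    2:{ clear. induction K; simpl. ring. rewrite IHK. unfold term. ring. }
    apply csum_norm. intros k Hk. rewrite Cmod_mult.
    assert (D := cpow_diff w0 w rho0 k Hw0 Hw Hr).
    assert (Cmod (c k) * rho0 ^ k <= Cc).
    { eapply Rle_trans. apply Hc. assert (th ^ k <= 1) by (rewrite <- (pow1 k); apply pow_incr; lra). nra. }
    assert (INR k <= INR K) by (apply le_INR; lia).
    generalize (Cmod_ge_0 (c k)) (Cmod_ge_0 (w0 - w)) (pos_INR k). intros.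
    assert (0 <= rho0 ^ k) by (apply pow_le; lra).
    assert (Cmod (c k) * Cmod (cpow w0 k - cpow w k) <= Cmod (c k) * (INR k * rho0 ^ k * Cmod (w0 - w))).
    { apply Rmult_le_compat_l; auto. }
    assert (Cmod (c k) * (INR k * rho0 ^ k * Cmod (w0 - w)) = (Cmod (c k) * rho0 ^ k) * INR k * Cmod (w0 - w)) by ring.
    assert ((Cmod (c k) * rho0 ^ k) * INR k * Cmod (w0 - w) <= Cc * INR K * Cmod (w0 - w)).
    { apply Rmult_le_compat_r; auto. apply Rmult_le_compat; auto. apply Rmult_le_pos; auto. }
    lra. }
  generalize (Cmod_tri3 l0 (csum (term c w0) K) lw) (Cmod_tri3 (csum (term c w0) K) (csum (term c w) K) lw).
  rewrite (Cmod_sub_sym (csum (term c w) K) lw). lra. Qed.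

Lemma phi_ge (phi : nat -> nat) : (forall n, (phi n < phi (S n))%nat) -> forall n, (n <= phi n)%nat.
Proof. intros H n. induction n. lia. specialize (H n). lia. Qed.

Lemma small_inv c d : 0 < c -> 0 < d -> exists N, forall m, (N <= m)%nat -> c / (INR m + 1) < d.
Proof. intros Hc Hd. destruct (archimed_cor1 (d / c) ltac:(apply Rdiv_lt_0_compat; lra)) as [N [HN HN0]].
  exists N. intros m Hm. assert (0 < INR N) by (apply lt_0_INR; lia).
  assert (INR N <= INR m) by (apply le_INR; lia).
  assert (/ (INR m + 1) < d / c). { eapply Rle_lt_trans; [|apply HN]. apply Rinv_le_contravar; lra. }
  unfold Rdiv. replace d with (c * (d / c)) by (field; lra).
  apply Rmult_lt_compat_l; auto. Qed.

Lemma key (U : coeffs -> Prop) (b : coeffs) R1 B :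
  (forall f, U f -> in_A0 f) -> compact_A U -> 1 < R1 -> (forall k, Cmod (b k) * R1 ^ k <= B) ->
  (forall u, U u -> forall w, Cmod w <= 1 -> nonzero_at (hadamard u b) w) ->
  exists rho, 1 < rho /\ forall u, U u -> forall w, Cmod w < rho -> nonzero_at (hadamard u b) w.
Proof. intros HU Hcomp HR1 HB Hnz.
  set (r := (R1 + 1) / (2 * R1)). set (rho0 := (R1 + 3) / 4). set (th := (R1 + 3) / (2 * (R1 + 1))).
  assert (Hr : 0 < r < 1). { unfold r. split. apply Rdiv_lt_0_compat; lra.
    apply Rmult_lt_reg_r with (2 * R1). lra. field_simplify; lra. }
  assert (Hrho0 : 1 < rho0) by (unfold rho0; lra).
  assert (Hth : 0 <= th < 1). { unfold th. split. apply Rlt_le, Rdiv_lt_0_compat; lra.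
    apply Rmult_lt_reg_r with (2 * (R1 + 1)). lra. field_simplify; lra. }
  assert (Hrel : rho0 = th * (r * R1)) by (unfold rho0, th, r; field; lra).
  assert (B0 : 0 <= B). { specialize (HB O). simpl in HB. generalize (Cmod_ge_0 (b O)). lra. }
  apply NNPP. intros Hno.
  assert (Hex : forall n : nat, exists p : coeffs * C, U (fst p) /\ Cmod (snd p) < 1 + (rho0 - 1) / (INR n + 1)
     /\ is_series (term (hadamard (fst p) b) (snd p)) (RtoC 0)).
  { intros n. apply NNPP. intros Hn. apply Hno. exists (1 + (rho0 - 1) / (INR n + 1)). split.
    { assert (0 < (rho0 - 1) / (INR n + 1)) by (apply Rdiv_lt_0_compat; generalize (pos_INR n); lra). lra. }
    intros u Hu w Hw l Hl Hl0. apply Hn. exists (u, w). simpl. subst l. auto. }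
  set (sel := fun n => proj1_sig (constructive_indefinite_description _ (Hex n))).
  assert (Hsel : forall n, U (fst (sel n)) /\ Cmod (snd (sel n)) < 1 + (rho0 - 1) / (INR n + 1)
     /\ is_series (term (hadamard (fst (sel n)) b) (snd (sel n))) (RtoC 0)).
  { intros n. exact (proj2_sig (constructive_indefinite_description _ (Hex n))). }
  destruct (Hcomp (fun n => fst (sel n)) (fun n => proj1 (Hsel n))) as [phi [u [Hphi [Uu Hcv]]]].
  set (vs := fun n => fst (sel (phi n))). set (zs := fun n => snd (sel (phi n))).
  assert (Hphi_ge := phi_ge phi Hphi).
  assert (Hzs : forall n, Cmod (zs n) < 1 + (rho0 - 1) / (INR n + 1)).
  { intros n. destruct (Hsel (phi n)) as [_ [H _]]. unfold zs. eapply Rlt_le_trans. apply H.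
    apply Rplus_le_compat_l. unfold Rdiv. apply Rmult_le_compat_l. lra.
    apply Rinv_le_contravar. generalize (pos_INR n); lra. apply Rplus_le_compat_r, le_INR, Hphi_ge. }
  assert (Hzs0 : forall n, Cmod (zs n) <= rho0).
  { intros n. specialize (Hzs n). assert ((rho0 - 1) / (INR n + 1) <= rho0 - 1).
    { unfold Rdiv. rewrite <- (Rmult_1_r (rho0 - 1)) at 2. apply Rmult_le_compat_l. lra.
      rewrite <- Rinv_1. apply Rinv_le_contravar. lra. generalize (pos_INR n); lra. }
    lra. }
  assert (Hvs0 : forall n, is_series (term (hadamard (vs n) b) (zs n)) (RtoC 0)).
  { intros n. apply (Hsel (phi n)). }
  assert (HAu : in_A u) by (apply HU; auto).
  assert (HAv : forall n, in_A (vs n)) by (intros n; apply HU; apply (Hsel (phi n))).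
  destruct (gbound_of_ex u 1 r HAu ltac:(lra)) as [A HA].
  set (Cc := A * B).
  assert (Hc : forall k, Cmod (hadamard u b k) * rho0 ^ k <= Cc * th ^ k).
  { intros k. unfold hadamard, Cc. rewrite Cmod_mult, Hrel. apply prod_bound; try apply Cmod_ge_0; auto; lra. }
  assert (Hcb : forall z, Cmod z <= rho0 -> forall k, Cmod (term (hadamard u b) z k) <= Cc * th ^ k).
  { intros z Hz k. eapply Rle_trans. apply Cmod_term_le; eauto. apply Hc. }
  destruct (cluster2D zs rho0 Hzs0) as [w0 Hw0].
  assert (Hw0le : Cmod w0 <= 1).
  { apply Rle_plus_epsilon. intros d Hd.
    destruct (small_inv (rho0 - 1) (d/2) ltac:(lra) ltac:(lra)) as [N HN].
    destruct (Hw0 (d/2) ltac:(lra) N) as [n [Hn Hn']].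
    specialize (HN n Hn). specialize (Hzs n).
    generalize (Cmod_tri3 w0 (zs n) 0). rewrite (Cmod_sub_sym w0 (zs n)).
    replace (w0 - 0)%C with w0 by ring. replace (zs n - 0)%C with (zs n) by ring. lra. }
  destruct (geom_ex _ _ _ Hth (Hcb w0 ltac:(lra))) as [l0 Hl0].
  assert (Hl0nz : l0 <> RtoC 0) by (apply (Hnz u Uu w0 Hw0le); auto).
  set (eta := Cmod l0).
  assert (Heta : 0 < eta) by (apply Cmod_gt_0; auto).
  destruct (pow_lt_1_zero th ltac:(rewrite Rabs_pos_eq; lra) (eta * (1 - th) / (6 * (Cc + 1)))) as [K HK].
  { assert (0 <= Cc) by (unfold Cc; specialize (HA O); simpl in HA; generalize (Cmod_ge_0 (u O)); intros; nra).
    apply Rdiv_lt_0_compat; nra. }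
  assert (Cc0 : 0 <= Cc) by (unfold Cc; specialize (HA O); simpl in HA; generalize (Cmod_ge_0 (u O)); intros; nra).
  assert (HKb : 2 * (Cc * th ^ K / (1 - th)) < eta / 3).
  { specialize (HK K (le_n K)). rewrite Rabs_pos_eq in HK by (apply pow_le; lra).
    assert (th ^ K * (Cc + 1) < eta * (1 - th) / (6 * (Cc + 1)) * (Cc + 1)) by (apply Rmult_lt_compat_r; lra).
    replace (eta * (1 - th) / (6 * (Cc + 1)) * (Cc + 1)) with (eta * (1 - th) / 6) in H by (field; lra).
    assert (0 <= th ^ K) by (apply pow_le; lra).
    assert (Cc * th ^ K < eta * (1 - th) / 6) by nra.
    assert (Cc * th ^ K / (1 - th) < eta / 6).
    { apply Rmult_lt_reg_r with (1 - th). lra. replace (Cc * th ^ K / (1 - th) * (1 - th)) with (Cc * th ^ K) by (field; lra).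
      replace (eta / 6 * (1 - th)) with (eta * (1 - th) / 6) by field. auto. }
    lra. }
  set (eps := eta * (1 - th) / (4 * (B + 1))).
  assert (Heps : 0 < eps) by (unfold eps; apply Rdiv_lt_0_compat; nra).
  assert (HepsB : eps * B / (1 - th) <= eta / 4).
  { unfold eps. apply Rmult_le_reg_r with (1 - th). lra.
    replace (eta * (1 - th) / (4 * (B + 1)) * B / (1 - th) * (1 - th)) with (eta * (1 - th) / 4 * (B / (B + 1))) by (field; lra).
    replace (eta / 4 * (1 - th)) with (eta * (1 - th) / 4 * 1) by field.
    apply Rmult_le_compat_l. apply Rlt_le, Rdiv_lt_0_compat; nra.
    apply Rmult_le_reg_r with (B + 1). lra. field_simplify; lra. }
  destruct (Hcv r Hr eps Heps) as [N1 HN1].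
  assert (HstepB : forall n, (N1 <= n)%nat -> forall k, Cmod (vs n k - u k) * r ^ k <= eps).
  { intros n Hn. apply stepB; auto. intros z Hz l1 l2 H1 H2. apply (HN1 n Hn z Hz l1 l2 H1 H2). }
  set (KK := INR K * INR K * Cc + 1).
  assert (HKK : 0 < KK) by (unfold KK; generalize (pos_INR K); intros; assert (0 <= INR K * INR K) by nra; nra).
  destruct (Hw0 (eta / (4 * KK)) ltac:(apply Rdiv_lt_0_compat; lra) N1) as [n [Hn Hnw]].
  destruct (geom_ex _ _ _ Hth (Hcb (zs n) (Hzs0 n))) as [lw Hlw].
  assert (HC := stepC (vs n) u b r R1 rho0 th eps B (zs n) 0 lw ltac:(lra) ltac:(lra) Hth Hrel (HstepB n Hn) HB (Hzs0 n) (Hvs0 n) Hlw).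
  assert (HT := contin (hadamard u b) Cc th rho0 K w0 (zs n) l0 lw Hth ltac:(lra) Hc ltac:(lra) (Hzs0 n) Hl0 Hlw).
  assert (INR K * (Cc * INR K * Cmod (w0 - zs n)) <= eta / 4).
  { rewrite (Cmod_sub_sym w0). replace (INR K * (Cc * INR K * Cmod (zs n - w0))) with ((INR K * INR K * Cc) * Cmod (zs n - w0)) by ring.
    assert (0 <= INR K * INR K * Cc) by (generalize (pos_INR K); intros; apply Rmult_le_pos; nra).
    apply Rle_trans with (KK * (eta / (4 * KK))).
    apply Rmult_le_compat; try lra. apply Cmod_ge_0. unfold KK; lra.
    right. field. lra. }
  generalize (Cmod_tri3 l0 lw 0). replace (l0 - 0)%C with l0 by ring. rewrite (Cmod_sub_sym lw 0).
  fold eta. lra. Qed.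

Lemma nz_ext a z a' z' : (forall k, term a z k = term a' z' k) -> nonzero_at a z -> nonzero_at a' z'.
Proof. intros H Hn l Hl. apply Hn. eapply is_series_ext_C; [|exact Hl]. intros k. symmetry. apply H. Qed.

Lemma term_hPx f g x z k : term (hadamard f (Px x g)) z k = term (hadamard f g) (x * z)%C k.
Proof. unfold term, hadamard, Px. rewrite cpow_mult. ring. Qed.

Lemma term_Px g x z k : term (Px x g) z k = term g (x * z)%C k.
Proof. unfold term, Px. rewrite cpow_mult. ring. Qed.

Lemma term_comm f g z k : term (hadamard f g) z k = term (hadamard g f) z k.
Proof. unfold term, hadamard. ring. Qed.

Lemma dual_sub (W : coeffs -> Prop) : (forall f, W f -> in_A0 f) -> forall f, W f -> dual (dual W) f.
Proof. intros HW f Hf. split. auto. intros g [_ Hg] z Hz. apply (nz_ext (hadamard f g) z). intros; apply term_comm.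
  apply Hg; auto. Qed.

Lemma dual_anti (A B : coeffs -> Prop) : (forall f, A f -> B f) -> forall g, dual B g -> dual A g.
Proof. intros H g [H1 H2]. split; auto. Qed.

Lemma dual_seteq A B : set_eq A B -> set_eq (dual A) (dual B).
Proof. intros H g. split; apply dual_anti; intros f; apply H. Qed.

Lemma triple (W : coeffs -> Prop) : (forall f, W f -> in_A0 f) -> set_eq (dual (dual (dual W))) (dual W).
Proof. intros HW g. split.
  - apply dual_anti. apply dual_sub; auto.
  - apply dual_sub. intros f [Hf _]. auto. Qed.

Lemma Px_AbarD0 g z : in_A0 g -> Cmod z < 1 -> in_AbarD0 (Px z g).
Proof. intros [Hg Hg0] Hz. split.
  - exists (2 / (1 + Cmod z)). assert (H0 := Cmod_ge_0 z). split.
    apply Rmult_lt_reg_r with (1 + Cmod z). lra. field_simplify; lra.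
    intros w Hw. apply (ex_series_ext (term g (z * w)%C)). intros k. symmetry. apply term_Px.
    apply Hg. rewrite Cmod_mult.
    assert (Cmod z * Cmod w <= Cmod z * (2 / (1 + Cmod z))) by (apply Rmult_le_compat_l; lra).
    assert (Cmod z * (2 / (1 + Cmod z)) < 1). { apply Rmult_lt_reg_r with (1 + Cmod z). lra. field_simplify; lra. }
    lra.
  - unfold Px. simpl. rewrite Hg0. ring. Qed.

Lemma b_to_c (U V : coeffs -> Prop) : set_eq (dualT U) (dualT V) -> forall g, dual U g -> dual V g.
Proof. intros H g [Hg Hgn]. split; auto. intros f Hf z Hz.
  assert (HT : dualT U (Px z g)).
  { split. apply Px_AbarD0; auto. intros u Hu. apply (nz_ext (hadamard u g) z).
    intros k. rewrite term_hPx, Cmult_1_r. reflexivity. apply Hgn; auto. }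
  apply H in HT. destruct HT as [_ HT]. specialize (HT f Hf).
  apply (nz_ext _ _ _ _ (fun k => term_hPx f g z 1 k)) in HT. rewrite Cmult_1_r in HT. exact HT. Qed.

Lemma c_to_b (U V : coeffs -> Prop) : (forall f, U f -> in_A0 f) -> compact_A U -> complete (dualT U) ->
  set_eq (dual U) (dual V) -> forall g, dualT U g -> dualT V g.
Proof. intros HU Hc Hcomp H g Hg. assert (Hg' := Hg). destruct Hg' as [[[R [HR HRs]] Hg0] Hgn].
  set (R1 := (1 + R) / 2).
  destruct (gbound_of_ex g R R1 HRs ltac:(unfold R1; lra)) as [B HB].
  assert (Hnz : forall u, U u -> forall w, Cmod w <= 1 -> nonzero_at (hadamard u g) w).
  { intros u Hu w Hw. destruct (Hcomp g Hg w Hw) as [_ Hx]. specialize (Hx u Hu).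
    apply (nz_ext _ _ _ _ (fun k => term_hPx u g w 1 k)) in Hx. rewrite Cmult_1_r in Hx. exact Hx. }
  destruct (key U g R1 B HU Hc ltac:(unfold R1; lra) HB Hnz) as [rho [Hrho Hrhon]].
  set (rp := (1 + Rmin rho R) / 2).
  assert (Hrp : 1 < rp /\ rp < rho /\ rp < R).
  { unfold rp. generalize (Rmin_l rho R) (Rmin_r rho R) (Rmin_glb_lt rho R 1 ltac:(lra) ltac:(lra)). intros. lra. }
  assert (HP : dual U (Px (RtoC rp) g)).
  { split. split.
    - intros z Hz. apply (ex_series_ext (term g (RtoC rp * z)%C)). intros k. symmetry. apply term_Px.
      apply HRs. rewrite Cmod_mult, Cmod_RtoC by lra.
      assert (rp * Cmod z < rp * 1) by (apply Rmult_lt_compat_l; lra). lra.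
    - unfold Px. simpl. rewrite Hg0. ring.
    - intros u Hu z Hz. apply (nz_ext (hadamard u g) (RtoC rp * z)%C).
      intros k. symmetry. apply term_hPx. apply Hrhon; auto. rewrite Cmod_mult, Cmod_RtoC by lra.
      assert (rp * Cmod z < rp * 1) by (apply Rmult_lt_compat_l; lra). lra. }
  apply H in HP. destruct HP as [_ HP]. split. apply Hg. intros f Hf.
  assert (Hz : Cmod (RtoC (/ rp)) < 1).
  { rewrite Cmod_RtoC. apply Rmult_lt_reg_r with rp. lra. rewrite Rinv_l by lra. lra.
    apply Rlt_le, Rinv_0_lt_compat; lra. }
  specialize (HP f Hf _ Hz).
  apply (nz_ext _ _ _ _ (fun k => term_hPx f g (RtoC rp) (RtoC (/ rp)) k)) in HP.
  rewrite <- RtoC_mult, Rinv_r in HP by lra. exact HP. Qed.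

Theorem corollary2 (U V : coeffs -> Prop) :
  (forall f, U f -> in_A0 f) -> (forall f, V f -> in_A0 f) ->
  compact_A U -> compact_A V ->
  complete (dualT U) -> complete (dualT V) ->
  (set_eq (dual (dual U)) (dual (dual V)) <-> set_eq (dualT U) (dualT V)) /\
  (set_eq (dualT U) (dualT V) <-> set_eq (dual U) (dual V)).
Proof. intros HU HV cU cV pU pV.
  assert (BC : set_eq (dualT U) (dualT V) -> set_eq (dual U) (dual V)).
  { intros H g. split. apply b_to_c; auto. apply b_to_c. intros f. symmetry. apply H. }
  assert (CB : set_eq (dual U) (dual V) -> set_eq (dualT U) (dualT V)).
  { intros H g. split. apply c_to_b; auto. apply c_to_b; auto. intros f. symmetry. apply H. }
  assert (AC : set_eq (dual (dual U)) (dual (dual V)) -> set_eq (dual U) (dual V)).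
  { intros H g. apply dual_seteq in H. rewrite <- (triple U HU g), <- (triple V HV g). apply H. }
  assert (CA : set_eq (dual U) (dual V) -> set_eq (dual (dual U)) (dual (dual V))).
  { intros H. apply dual_seteq, H. }
  split; split; auto. Qed.
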